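(* Let $H$ be a complex Hilbert space, $\varphi,\psi:[0,1]\to\mathbb{R}$ continuous, $A\in\mathbb{B}(H)$ and $t\in[0,1]$. Then $$\frac14\big(\min\{|\varphi(t)+\psi(t)|,|\varphi(t)-\psi(t)|\}\big)^2\|A^*A+AA^*\|\le\omega_t^2(\varphi,\psi;A)\le\frac12\big(\max\{|\varphi(t)+\psi(t)|,|\varphi(t)-\psi(t)|\}\big)^2\|A^*A+AA^*\|.$$
   Context: $S_1(H)$ is the unit sphere of $H$ and $\omega_t(\varphi,\psi;A)=\sup_{x\in S_1(H)}|\langle(\varphi(t)A+\psi(t)A^* )x,x\rangle|$. *)

(* Defs.v *)
From HB Require Import structures.
From mathcomp Require Import all_boot all_order all_algebra.
From mathcomp Require Import all_classical all_reals all_analysis.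
From mathcomp Require Import complex.
Set Implicit Arguments. Unset Strict Implicit. Unset Printing Implicit Defensive.
Import Order.TTheory GRing.Theory Num.Theory.
Import numFieldNormedType.Exports.
Local Open Scope ring_scope.
Local Open Scope classical_set_scope.

Section Hilbert.
Variable R : realType.
Variable V : lmodType R[i].
Variable ip : V -> V -> R[i].

Definition hnorm (x : V) : R := Num.sqrt (complex.Re (ip x x)).

Definition is_hilbert : Prop :=
  [/\ (forall (a : R[i]) (x y z : V), ip (a *: x + y) z = a * ip x z + ip y z),
      (forall x y : V, ip y x = (ip x y)^*%C),
      (forall x : V, 0 <= ip x x),
      (forall x : V, ip x x = 0 -> x = 0) &
      (forall u : nat -> V,
         (forall e : R, 0 < e -> exists N : nat, forall m n : nat,
              (N <= m)%N -> (N <= n)%N -> hnorm (u m - u n) < e) ->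
         exists l : V, forall e : R, 0 < e -> exists N : nat, forall n : nat,
              (N <= n)%N -> hnorm (u n - l) < e)].

Definition bounded_op (A : V -> V) : Prop :=
  (forall (a : R[i]) (x y : V), A (a *: x + y) = a *: A x + A y) /\
  exists M : R, forall x : V, hnorm (A x) <= M * hnorm x.

Definition is_adjoint (A B : V -> V) : Prop :=
  forall x y : V, ip (A x) y = ip x (B y).

Definition unit_sphere : set V := [set x | hnorm x = 1].

Definition opnorm (T : V -> V) : R := sup [set hnorm (T x) | x in unit_sphere].

Definition omega_t (phi psi : R -> R) (t : R) (A Astar : V -> V) : R :=
  sup [set complex.Re `|ip ((phi t)%:C%C *: A x + (psi t)%:C%C *: Astar x) x|
      | x in unit_sphere].

End Hilbert.

(* Main.v *)
Require Import Defs.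
From mathcomp Require Import all_boot all_order all_algebra.
From mathcomp Require Import all_classical all_reals all_analysis.
From mathcomp Require Import complex.
From mathcomp Require Import ring lra.
Import Order.TTheory GRing.Theory Num.Theory.
Import numFieldNormedType.Exports.
Local Open Scope ring_scope.
Local Open Scope classical_set_scope.
Set Implicit Arguments. Unset Strict Implicit.

Section Gen.
Variable R : realType.
Notation re := (@complex.Re R).
Notation im := (@complex.Im R).

Definition ab (z : R[i]) : R := complex.Re `|z|.

Lemma ab_def z : ab z = Num.sqrt (re z ^+ 2 + im z ^+ 2).
Proof. by rewrite /ab normc_def. Qed.

Lemma ab_ge0 z : 0 <= ab z.
Proof. by rewrite ab_def sqrtr_ge0. Qed.

Lemma ab_sq z : ab z ^+ 2 = re z ^+ 2 + im z ^+ 2.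
Proof. by rewrite ab_def sqr_sqrtr // addr_ge0 // sqr_ge0. Qed.

Lemma sq_le (u v : R) : 0 <= v -> u ^+ 2 <= v ^+ 2 -> u <= v.
Proof. move=> h1 h2. nra. Qed.

Lemma ab_eq (z : R[i]) (v : R) : 0 <= v -> re z ^+ 2 + im z ^+ 2 = v ^+ 2 -> ab z = v.
Proof. by move=> h1 h2; rewrite ab_def h2 sqrtr_sqr ger0_norm. Qed.

Lemma re_le_ab z : `|re z| <= ab z.
Proof. apply: sq_le; first exact: ab_ge0. rewrite ab_sq real_normK ?num_real //.
 have := sqr_ge0 (im z). lra. Qed.

Lemma ab_real (k : R) : ab (k%:C)%C = `|k|.
Proof. apply: ab_eq => //=. by rewrite expr0n /= addr0 real_normK ?num_real. Qed.

Lemma ab_scale (k : R) (w : R[i]) : ab (k%:C%C * w) = `|k| * ab w.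
Proof. apply: ab_eq; first by rewrite mulr_ge0 // ab_ge0.
 case: w => x y /=. rewrite exprMn ab_sq /= real_normK ?num_real //. ring. Qed.

Lemma ab_conj w : ab (w^*%C) = ab w.
Proof. apply: ab_eq; first exact: ab_ge0. rewrite ab_sq. case: w => x y /=. ring. Qed.

Lemma ab_sq_le (u K : R) : 0 <= u -> u ^+ 2 <= K -> u <= K + 1.
Proof. move=> h1 h2. nra. Qed.
End Gen.

Section Hil.
Variable R : realType.
Variable V : lmodType R[i].
Variable ip : V -> V -> R[i].
Hypothesis hH : is_hilbert ip.
Notation re := (@complex.Re R).
Notation im := (@complex.Im R).

Definition nn x := re (ip x x).

Lemma ipDZ_l a x y z : ip (a *: x + y) z = a * ip x z + ip y z.
Proof. by case: hH. Qed.
Lemma ip_conj x y : ip y x = (ip x y)^*%C.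
Proof. by case: hH. Qed.
Lemma ip0_l z : ip 0 z = 0.
Proof. have := ipDZ_l 1 0 0 z. rewrite scale1r addr0 mul1r => h.
 by have := congr1 (fun w => w - ip 0 z) h; rewrite subrr addrK. Qed.
Lemma ipD_l x y z : ip (x + y) z = ip x z + ip y z.
Proof. by have := ipDZ_l 1 x y z; rewrite scale1r mul1r. Qed.
Lemma ipZ_l a x z : ip (a *: x) z = a * ip x z.
Proof. by rewrite -[a *: x]addr0 ipDZ_l ip0_l addr0. Qed.
Lemma ipN_l x z : ip (- x) z = - ip x z.
Proof. by rewrite -scaleN1r ipZ_l mulN1r. Qed.
Lemma ipB_l x y z : ip (x - y) z = ip x z - ip y z.
Proof. by rewrite ipD_l ipN_l. Qed.
Lemma ipD_r x y z : ip z (x + y) = ip z x + ip z y.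
Proof. by rewrite ip_conj ipD_l rmorphD /= -!ip_conj. Qed.
Lemma ipZ_r a x z : ip z (a *: x) = a^*%C * ip z x.
Proof. by rewrite ip_conj ipZ_l rmorphM /= -!ip_conj. Qed.
Lemma ipN_r x z : ip z (- x) = - ip z x.
Proof. by rewrite ip_conj ipN_l rmorphN /= -!ip_conj. Qed.
Lemma ipB_r x y z : ip z (x - y) = ip z x - ip z y.
Proof. by rewrite ipD_r ipN_r. Qed.
Lemma ip0_r z : ip z 0 = 0.
Proof. by rewrite ip_conj ip0_l conjc0. Qed.

Lemma ip_self x : ip x x = (nn x)%:C%C.
Proof. have : 0 <= ip x x by case: hH. rewrite /nn; case: (ip x x) => a b.
 rewrite lecE /= => /andP[/eqP -> _]. by []. Qed.
Lemma nn_ge0 x : 0 <= nn x.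
Proof. have : 0 <= ip x x by case: hH. by rewrite lecE => /andP[]. Qed.
Lemma nn0 x : nn x = 0 -> x = 0.
Proof. move=> h. have : ip x x = 0 by rewrite ip_self h. by case: hH => _ _ _ hd _ /hd. Qed.
Lemma hnorm_sq x : hnorm ip x ^+ 2 = nn x.
Proof. by rewrite /hnorm sqr_sqrtr // nn_ge0. Qed.
Lemma hnorm_ge0 x : 0 <= hnorm ip x.
Proof. exact: sqrtr_ge0. Qed.
Lemma unit_nn x : hnorm ip x = 1 -> nn x = 1.
Proof. by move=> h; rewrite -hnorm_sq h expr1n. Qed.

Lemma conjCr (k : R) : ((k%:C)%C)^*%C = (k%:C)%C :> R[i].
Proof. by rewrite /= oppr0. Qed.

Lemma re_conj (z : R[i]) : re (z^*%C) = re z.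
Proof. by case: z. Qed.

Lemma ip_scale_self (k : R[i]) x : ip (k *: x) (k *: x) = k * k^*%C * ip x x.
Proof. by rewrite ipZ_l ipZ_r mulrA. Qed.

Lemma nn_real_scale (k : R) x : nn ((k%:C)%C *: x) = k ^+ 2 * nn x.
Proof. rewrite /nn ip_scale_self conjc_real ip_self /=. ring. Qed.

Lemma CS x y : ab (ip x y) ^+ 2 <= nn x * nn y.
Proof.
have [y0|yn0] := eqVneq (nn y) 0.
  by rewrite y0 (nn0 y0) ip0_r mulr0 (ab_real (0:R)) normr0 expr0n.
have kp : 0 < nn y by rewrite lt_neqAle eq_sym yn0 nn_ge0.
set z := ip x y.
have zz : z * z^*%C = (ab z ^+ 2)%:C%C.
  rewrite ab_sq /z; case: (ip x y) => u v /=. simpc. by congr Complex; ring.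
have hk : ((nn y)^-1)%:C%C * (nn y)%:C%C = 1 :> R[i].
  by rewrite -rmorphM mulVf // rmorph1.
have e : ip (x - ((nn y)^-1)%:C%C *: (z *: y)) (x - ((nn y)^-1)%:C%C *: (z *: y))
   = (nn x)%:C%C - z * z^*%C * ((nn y)^-1)%:C%C.
  rewrite ipB_l !ipB_r !ipZ_l !ipZ_r ?ipZ_l (ip_conj x y) -/z !ip_self !conjCr.
  set c := ((nn y)^-1)%:C%C; set d := (nn y)%:C%C.
  transitivity ((nn x)%:C%C - c * (z^*%C * z) - c * (z * z^*%C) + c * z * z^*%C * (c * d)).
    ring.
  rewrite hk; ring.
have := nn_ge0 (x - ((nn y)^-1)%:C%C *: (z *: y)).
rewrite /nn e zz -rmorphM -rmorphB /= -/(nn x).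
rewrite subr_ge0 ler_pdivrMr //.
Qed.

Lemma CS' x y : ab (ip x y) <= hnorm ip x * hnorm ip y.
Proof. apply: sq_le; first by rewrite mulr_ge0 // hnorm_ge0.
 by rewrite exprMn !hnorm_sq CS. Qed.

Lemma opL (S : V -> V) (c : R) :
  (forall a x y, S (a *: x + y) = a *: S x + S y) ->
  (forall x y, ip (S x) y = ip x (S y)) ->
  0 <= c ->
  (forall z, ab (ip (S z) z) <= c * nn z) ->
  forall x, nn (S x) <= c ^+ 2 * nn x.
Proof.
move=> hl hs c0 hb x.
have S0 : S 0 = 0.
  have h := hl 1 0 0; rewrite !scale1r addr0 in h.
  by have := congr1 (fun w => w - S 0) h; rewrite subrr addrK.
have SD u v : S (u + v) = S u + S v by have := hl 1 u v; rewrite !scale1r.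
have SB u v : S (u - v) = S u - S v.
  by rewrite addrC -scaleN1r hl scaleN1r addrC.
have key y : 4 * re (ip (S x) y) <= c * (2 * nn x + 2 * nn y).
  have id1 : ip (S (x + y)) (x + y) - ip (S (x - y)) (x - y)
      = 2%:R * (ip (S x) y + (ip (S x) y)^*%C).
    rewrite SD SB !ipD_l !ipN_l !ipD_r !ipN_r.
    have -> : ip (S y) x = (ip (S x) y)^*%C by rewrite hs ip_conj.
    ring.
  have id2 : ip (x + y) (x + y) + ip (x - y) (x - y) = 2%:R * (ip x x + ip y y).
    rewrite !ipD_l !ipN_l !ipD_r !ipN_r. ring.
  have r1 : re (ip (S (x + y)) (x + y)) - re (ip (S (x - y)) (x - y))
      = 4 * re (ip (S x) y).
    rewrite -raddfB id1. case: (ip (S x) y) => u v /=. ring.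
  have r2 : nn (x + y) + nn (x - y) = 2 * nn x + 2 * nn y.
    rewrite /nn -raddfD id2. rewrite /nn; case: (ip x x) => u v; case: (ip y y) => u' v' /=. ring.
  rewrite -r1.
  have h1 := re_le_ab (ip (S (x + y)) (x + y)).
  have h2 := re_le_ab (ip (S (x - y)) (x - y)).
  have h3 := hb (x + y). have h4 := hb (x - y).
  have h5 := ler_norm (re (ip (S (x + y)) (x + y))).
  have h7 := normr_ge0 (re (ip (S (x - y)) (x - y))).
  have h8 : - re (ip (S (x - y)) (x - y)) <= `|re (ip (S (x - y)) (x - y))|.
    by rewrite -normrN ler_norm.
  have : c * nn (x + y) + c * nn (x - y) = c * (2 * nn x + 2 * nn y) by rewrite -r2 mulrDr.
  lra.
have H s : 4 * (s * nn (S x)) <= c * (2 * nn x + 2 * (s ^+ 2 * nn (S x))).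
  have := key ((s%:C)%C *: S x).
  rewrite nn_real_scale ipZ_r conjCr ip_self -rmorphM /=. done.
have q0 := nn_ge0 (S x). have r0 := nn_ge0 x.
have [ce|cn0] := eqVneq c 0.
  have := H 1; rewrite ce expr1n !mul0r mul1r expr0n /= mul0r. lra.
have cp : 0 < c by rewrite lt_neqAle eq_sym cn0 c0.
have := H c^-1.
move=> h.
have h' := ler_wpM2l (ltW cp) h.
have e1 : c * (4 * (c^-1 * nn (S x))) = 4 * nn (S x) by field.
have e2 : c * (c * (2 * nn x + 2 * (c^-1 ^+ 2 * nn (S x)))) = 2 * (c ^+ 2 * nn x) + 2 * nn (S x) by field.
rewrite e1 e2 in h'. lra.
Qed.

End Hil.

Section Ops.
Variable R : realType.
Variable V : lmodType R[i].
Variable ip : V -> V -> R[i].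
Hypothesis hH : is_hilbert ip.
Variables A As : V -> V.
Hypothesis Alin : forall a x y, A (a *: x + y) = a *: A x + A y.
Hypothesis hadj : is_adjoint ip A As.
Notation re := (@complex.Re R).
Notation im := (@complex.Im R).

Lemma lin0 (F : V -> V) : (forall a x y, F (a *: x + y) = a *: F x + F y) -> F 0 = 0.
Proof. move=> hl. have h := hl 1 0 0; rewrite !scale1r addr0 in h.
  by have := congr1 (fun w => w - F 0) h; rewrite subrr addrK. Qed.
Lemma linZ (F : V -> V) : (forall a x y, F (a *: x + y) = a *: F x + F y) ->
  forall a x, F (a *: x) = a *: F x.
Proof. move=> hl a x. by rewrite -[a *: x]addr0 hl (lin0 hl) addr0. Qed.

Lemma AsL a x y : As (a *: x + y) = a *: As x + As y.
Proof.
set d := As (a *: x + y) - (a *: As x + As y).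
have hd w : ip w d = 0.
  rewrite /d ipB_r // ipD_r // ipZ_r // -!hadj ipD_r // ipZ_r //. by rewrite subrr.
apply/eqP; rewrite -subr_eq0; apply/eqP; apply: (nn0 hH).
by rewrite /nn hd.
Qed.

Definition lc (k c d : R[i]) (z : V) := k *: (c *: A z + d *: As z).

Lemma lc_lin k c d a x y : lc k c d (a *: x + y) = a *: lc k c d x + lc k c d y.
Proof.
rewrite /lc Alin AsL !scalerDr !scalerA.
by rewrite [k * c * a]mulrC [k * d * a]mulrC addrACA.
Qed.

Lemma ipAs_l x y : ip (As x) y = ip x (A y).
Proof. by rewrite ip_conj // -hadj -ip_conj. Qed.

Lemma lc_sa k c d : k^*%C = k -> c^*%C = d -> d^*%C = c ->
  forall x y, ip (lc k c d x) y = ip x (lc k c d y).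
Proof.
move=> hk hc hd x y. rewrite /lc (ipZ_l hH) (ipZ_r hH) hk (ipD_l hH) (ipD_r hH) !(ipZ_l hH) !(ipZ_r hH) hc hd.
rewrite hadj ipAs_l. ring.
Qed.

Lemma ip_lc k c d z : ip (lc k c d z) z = k * (c * ip (A z) z + d * (ip (A z) z)^*%C).
Proof. by rewrite /lc (ipZ_l hH) (ipD_l hH) !(ipZ_l hH) (ip_conj hH z (As z)) -hadj. Qed.

Definition U z := As (A z) + A (As z).

Lemma U_lin a x y : U (a *: x + y) = a *: U x + U y.
Proof. by rewrite /U Alin !AsL Alin scalerDr addrACA. Qed.

Lemma U_sa x y : ip (U x) y = ip x (U y).
Proof.
rewrite /U (ipD_l hH) (ipD_r hH) ipAs_l hadj; congr (_ + _).
by rewrite hadj -ipAs_l.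
Qed.

Lemma ipU z : ip (U z) z = (nn ip (A z) + nn ip (As z))%:C%C.
Proof. by rewrite /U (ipD_l hH) hadj ipAs_l !(ip_self hH) rmorphD. Qed.

End Ops.

Unset Implicit Arguments. Set Strict Implicit.
Notation re := (@complex.Re _).
Notation im := (@complex.Im _).

Theorem corollary4p2 (R : realType) (V : lmodType R[i]) (ip : V -> V -> R[i])
  (phi psi : R -> R) (A Astar : V -> V) (t : R) :
  is_hilbert ip ->
  {within `[0, 1], continuous phi} ->
  {within `[0, 1], continuous psi} ->
  bounded_op ip A ->
  is_adjoint ip A Astar ->
  t \in `[0, 1] ->
  let m := Num.min `|phi t + psi t| `|phi t - psi t| in
  let M := Num.max `|phi t + psi t| `|phi t - psi t| in
  let N := opnorm ip (fun x => Astar (A x) + A (Astar x)) in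
  4^-1 * m ^+ 2 * N <= (omega_t ip phi psi t A Astar) ^+ 2 /\
  (omega_t ip phi psi t A Astar) ^+ 2 <= 2^-1 * M ^+ 2 * N.
Proof.
move=> hH _ _ [Alin [M0 hM0]] hadj _ m M N.
set a := phi t; set b := psi t.
set T := lc A Astar 1 a%:C%C b%:C%C.
set W := omega_t ip phi psi t A Astar.
have eW : W = sup [set ab (ip (T x) x) | x in unit_sphere ip].
  rewrite /W /omega_t; congr sup; apply/funext=> r; apply/propext.
  by split=> -[x hx <-]; exists x => //; rewrite /T /lc scale1r.
have eN : N = sup [set hnorm ip (U A Astar x) | x in unit_sphere ip] by [].
have hm0 : 0 <= m by rewrite /m le_min !normr_ge0.
have hma : m <= `|a + b| by rewrite /m ge_min lexx.
have hmb : m <= `|a - b| by rewrite /m ge_min lexx orbT.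
have hMa : `|a + b| <= M by rewrite /M le_max lexx.
have hMb : `|a - b| <= M by rewrite /M le_max lexx orbT.
clearbody W N m M.
have sqn (u v : R) : 0 <= u -> u <= `|v| -> u ^+ 2 <= v ^+ 2.
  move=> h1 h2. rewrite -[v ^+ 2]real_normK ?num_real //. have := normr_ge0 v. nra.
have sqn' (u v : R) : `|v| <= u -> v ^+ 2 <= u ^+ 2.
  move=> h2. rewrite -[v ^+ 2]real_normK ?num_real //. have := normr_ge0 v. nra.
have hma2 := sqn _ _ hm0 hma. have hmb2 := sqn _ _ hm0 hmb.
have hMa2 := sqn' _ _ hMa. have hMb2 := sqn' _ _ hMb.
have AsL := AsL hH hadj.
have Tlin := lc_lin hH Alin hadj.
have nnA x : nn ip (A x) <= M0 ^+ 2 * nn ip x.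
  have := hM0 x; have := hnorm_ge0 ip (A x); have := hnorm_ge0 ip x.
  rewrite -!(hnorm_sq hH). nra.
have nnAs y : nn ip (Astar y) <= M0 ^+ 2 * nn ip y.
  have e : nn ip (Astar y) = re (ip (A (Astar y)) y) by rewrite /nn hadj.
  have h1 := re_le_ab (ip (A (Astar y)) y).
  have h2 := CS hH (A (Astar y)) y.
  have h3 := nnA (Astar y).
  have q0 := nn_ge0 hH (Astar y). have r0 := nn_ge0 hH y.
  have h4 : nn ip (Astar y) ^+ 2 <= ab (ip (A (Astar y)) y) ^+ 2.
    apply: sqn => //; rewrite e ger0_norm ?ab_ge0 //; exact: le_trans (ler_norm _) h1.
  have h5 := ler_wpM2r r0 h3.
  have h6 : nn ip (Astar y) * nn ip (Astar y) <= nn ip (Astar y) * (M0 ^+ 2 * nn ip y).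
    rewrite -expr2. apply: le_trans h4 _. apply: le_trans h2 _. apply: le_trans h5 _.
    by rewrite mulrA [_ * nn ip (Astar y)]mulrC.
  have [q00|qn0] := eqVneq (nn ip (Astar y)) 0.
    by rewrite q00 mulr_ge0 // sqr_ge0.
  have qp : 0 < nn ip (Astar y) by rewrite lt_neqAle eq_sym qn0 q0.
  by rewrite -(ler_pM2l qp).
have TZ := linZ (Tlin 1 a%:C%C b%:C%C).
have formT z : ab (ip (T z) z) ^+ 2 =
    (a + b) ^+ 2 * re (ip (A z) z) ^+ 2 + (a - b) ^+ 2 * im (ip (A z) z) ^+ 2.
  rewrite /T (ip_lc hH hadj) ab_sq. case: (ip (A z) z) => u v /=. ring.
have Tle z : ab (ip (T z) z) ^+ 2 <= M ^+ 2 * ab (ip (A z) z) ^+ 2.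
  rewrite formT ab_sq. have := sqr_ge0 (re (ip (A z) z)); have := sqr_ge0 (im (ip (A z) z)).
  nra.
case: (pselect (exists x, unit_sphere ip x)) => [[x0 hx0]|emp]; last first.
  have e1 (f : V -> R) : [set f x | x in unit_sphere ip] = set0.
    apply/seteqP; split => // r [x hx _]; apply: emp; by exists x.
  rewrite eW eN !e1 sup0 expr0n /= !mulr0. split; exact: lexx.
have unn u : unit_sphere ip u -> nn ip u = 1 by move=> hu; exact: (unit_nn hH hu).
have hasW : has_ubound [set ab (ip (T x) x) | x in unit_sphere ip].
  exists (M ^+ 2 * M0 ^+ 2 + 1) => _ [u hu <-].
  apply: ab_sq_le; first exact: ab_ge0.
  have c1 := CS hH (A u) u. rewrite (unn u hu) mulr1 in c1.
  apply: le_trans (Tle u) _. apply: ler_wpM2l; first exact: sqr_ge0.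
  apply: le_trans c1 _. by have := nnA u; rewrite (unn u hu) mulr1.
have Ub : forall z, ab (ip (U A Astar z) z) <= (M0 ^+ 2 + M0 ^+ 2) * nn ip z.
  move=> z. rewrite (ipU hH hadj) ab_real ger0_norm; last by rewrite addr_ge0 // nn_ge0.
  have := nnA z; have := nnAs z. lra.
have hnU := opL hH (U_lin hH Alin hadj) (U_sa hH hadj)
   (addr_ge0 (sqr_ge0 M0) (sqr_ge0 M0)) Ub.
have hasN : has_ubound [set hnorm ip (U A Astar x) | x in unit_sphere ip].
  exists (M0 ^+ 2 + M0 ^+ 2) => _ [u hu <-].
  apply: sq_le; first by rewrite addr_ge0 // sqr_ge0.
  by rewrite (hnorm_sq hH) -[X in _ <= X]mulr1 -(unn u hu) hnU.
have W0 : 0 <= W.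
  rewrite eW; apply: le_trans (ab_ge0 (ip (T x0) x0)) _.
  by apply: (ub_le_sup hasW); by exists x0.
have N0 : 0 <= N.
  rewrite eN; apply: le_trans (hnorm_ge0 ip (U A Astar x0)) _.
  by apply: (ub_le_sup hasN); by exists x0.
have hNu u : unit_sphere ip u -> hnorm ip (U A Astar u) <= N.
  by move=> hu; rewrite eN; apply: (ub_le_sup hasN); by exists u.
have hWu u : unit_sphere ip u -> ab (ip (T u) u) <= W.
  by move=> hu; rewrite eW; apply: (ub_le_sup hasW); by exists u.
split; last first.
  have K0 : 0 <= 2^-1 * M ^+ 2 * N.
    by apply: mulr_ge0 => //; apply: mulr_ge0; [rewrite invr_ge0 | exact: sqr_ge0].
  have up : W <= Num.sqrt (2^-1 * M ^+ 2 * N).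
    rewrite eW; apply: ge_sup; first by exists (ab (ip (T x0) x0)); exists x0.
    move=> _ [u hu <-].
    apply: sq_le; first exact: sqrtr_ge0. rewrite sqr_sqrtr //.
    have c1 := CS hH (A u) u. rewrite (unn u hu) mulr1 in c1.
    have c2 := CS hH u (Astar u). rewrite -hadj (unn u hu) mul1r in c2.
    have c3 : nn ip (A u) + nn ip (Astar u) <= N.
      have := CS' hH (U A Astar u) u. rewrite (ipU hH hadj) ab_real ger0_norm;
        last by rewrite addr_ge0 // nn_ge0.
      rewrite hu mulr1 => h; exact: le_trans h (hNu u hu).
    have p2 : ab (ip (A u) u) ^+ 2 <= 2^-1 * N by lra.
    have := ler_wpM2l (sqr_ge0 M) p2. have := Tle u. lra.
  have := sqr_sqrtr K0. have := sqrtr_ge0 (2^-1 * M ^+ 2 * N). nra.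
have [m00|mn0] := eqVneq m 0.
  by rewrite m00 expr0n /= mulr0 mul0r sqr_ge0.
have mp : 0 < m by rewrite lt_neqAle eq_sym mn0 hm0.
have ab0 : ab (0 : R[i]) = 0.
  by rewrite -[0 : R[i]]/((0:R)%:C%C) ab_real normr0.
have hW z : ab (ip (T z) z) <= W * nn ip z.
  have [z0|zn0] := eqVneq (nn ip z) 0.
    by rewrite z0 (nn0 hH z0) (ip0_r hH) ab0 mulr0.
  have np : 0 < nn ip z by rewrite lt_neqAle eq_sym zn0 nn_ge0.
  set h := hnorm ip z.
  have hp : 0 < h by rewrite /h /hnorm sqrtr_gt0.
  set u := (h^-1)%:C%C *: z.
  have hu : unit_sphere ip u.
    rewrite /unit_sphere /= /hnorm -/(nn ip u) /u (nn_real_scale hH) -(hnorm_sq hH z) -/h.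
    by rewrite exprVn mulVf ?sqrtr1 // expf_neq0 // gt_eqF.
  have ez : z = h%:C%C *: u.
    by rewrite /u scalerA -rmorphM mulfV ?scale1r // gt_eqF.
  rewrite ez /T TZ -/T (ipZ_l hH) (ipZ_r hH) conjCr mulrA -rmorphM ab_scale.
  rewrite (nn_real_scale hH) (unn u hu) mulr1 ger0_norm; last by apply: mulr_ge0; apply: ltW.
  rewrite -expr2 mulrC. apply: ler_wpM2r; first exact: sqr_ge0. exact: hWu.
set S1 := lc A Astar ((a + b) / 2)%:C%C 1 1.
set S2 := lc A Astar ((a - b) / 2)%:C%C (-'i%C) 'i%C.
have ci : ('i%C : R[i])^*%C = -'i%C.
  by apply/eqP; rewrite eq_complex /= oppr0 !eqxx.
have cmi : (-'i%C : R[i])^*%C = 'i%C.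
  by apply/eqP; rewrite eq_complex /= oppr0 opprK !eqxx.
have c1 : (1 : R[i])^*%C = 1 by apply: conjc1.
have sa1 := lc_sa hH hadj (conjCr ((a + b) / 2)) c1 c1.
have sa2 := lc_sa hH hadj (conjCr ((a - b) / 2)) cmi ci.
have lin1 := Tlin ((a + b) / 2)%:C%C 1 1.
have lin2 := Tlin ((a - b) / 2)%:C%C (-'i%C) 'i%C.
have ipS1 z : ip (S1 z) z = ((a + b) * re (ip (A z) z))%:C%C.
  rewrite /S1 (ip_lc hH hadj); case: (ip (A z) z) => u v.
  apply/eqP; rewrite eq_complex /=; apply/andP; split; apply/eqP; by field.
have ipS2 z : ip (S2 z) z = ((a - b) * im (ip (A z) z))%:C%C.
  rewrite /S2 (ip_lc hH hadj); case: (ip (A z) z) => u v.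
  apply/eqP; rewrite eq_complex /=; apply/andP; split; apply/eqP; by field.
have sqab (c : R) z : c ^+ 2 <= ab (ip (T z) z) ^+ 2 -> `|c| <= W * nn ip z.
  move=> hc; apply: le_trans (hW z). apply: sq_le; first exact: ab_ge0.
  by rewrite real_normK ?num_real.
have bS1 z : ab (ip (S1 z) z) <= W * nn ip z.
  rewrite ipS1 ab_real; apply: sqab; rewrite formT exprMn.
  have := mulr_ge0 (sqr_ge0 (a - b)) (sqr_ge0 (im (ip (A z) z))). lra.
have bS2 z : ab (ip (S2 z) z) <= W * nn ip z.
  rewrite ipS2 ab_real; apply: sqab; rewrite formT exprMn.
  have := mulr_ge0 (sqr_ge0 (a + b)) (sqr_ge0 (re (ip (A z) z))). lra.
have nS1 := opL hH lin1 sa1 W0 bS1.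
have nS2 := opL hH lin2 sa2 W0 bS2.
have nn_i w : nn ip ('i%C *: w) = nn ip w.
  rewrite /nn (ip_scale_self hH) ci mulrN -expr2 sqr_i opprK mul1r. done.
have nnS1 z : nn ip (S1 z) = ((a + b) / 2) ^+ 2 * nn ip (A z + Astar z).
  by rewrite /S1 /lc !scale1r (nn_real_scale hH).
have nnS2 z : nn ip (S2 z) = ((a - b) / 2) ^+ 2 * nn ip (Astar z - A z).
  rewrite /S2 /lc (nn_real_scale hH); congr (_ * _).
  by rewrite scaleNr addrC -scalerBr nn_i.
have par z : nn ip (A z + Astar z) + nn ip (Astar z - A z) = 2 * (nn ip (A z) + nn ip (Astar z)).
  have id : ip (A z + Astar z) (A z + Astar z) + ip (Astar z - A z) (Astar z - A z)
     = 2%:R * (ip (A z) (A z) + ip (Astar z) (Astar z)).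
    rewrite !(ipD_l hH) !(ipN_l hH) !(ipD_r hH) !(ipN_r hH). ring.
  rewrite /nn -raddfD id. case: (ip (A z) (A z)) => u v; case: (ip (Astar z) (Astar z)) => u' v' /=. ring.
have m2p : 0 < m ^+ 2 by rewrite exprn_gt0.
set c := 4 * W ^+ 2 / m ^+ 2.
have c0 : 0 <= c by rewrite /c divr_ge0 // ?mulr_ge0 // sqr_ge0.
have key z : ab (ip (U A Astar z) z) <= c * nn ip z.
  rewrite (ipU hH hadj) ab_real ger0_norm; last by rewrite addr_ge0 // nn_ge0.
  have h1 := nS1 z; have h2 := nS2 z. rewrite nnS1 in h1; rewrite nnS2 in h2.
  have X0 := nn_ge0 hH (A z + Astar z). have Y0 := nn_ge0 hH (Astar z - A z).
  have k1 := ler_wpM2r X0 hma2. have k2 := ler_wpM2r Y0 hmb2.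
  have pz : m ^+ 2 * (nn ip (A z + Astar z) + nn ip (Astar z - A z)) = m ^+ 2 * (2 * (nn ip (A z) + nn ip (Astar z))) by rewrite par.
  have kk : m ^+ 2 * (nn ip (A z) + nn ip (Astar z)) <= 4 * (W ^+ 2 * nn ip z) by lra.
  rewrite -(ler_pM2l m2p).
  have -> : m ^+ 2 * (c * nn ip z) = 4 * (W ^+ 2 * nn ip z) by rewrite /c; field.
  exact: kk.
have nU := opL hH (U_lin hH Alin hadj) (U_sa hH hadj) c0 key.
have hNc : N <= c.
  rewrite eN; apply: ge_sup; first by exists (hnorm ip (U A Astar x0)); exists x0.
  move=> _ [u hu <-]. apply: sq_le => //.
  by rewrite (hnorm_sq hH) -[X in _ <= X]mulr1 -(unn u hu) nU.
have i4 : 0 <= 4^-1 * m ^+ 2 :> R by rewrite mulr_ge0 // ?sqr_ge0 // invr_ge0.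
have := ler_wpM2l i4 hNc.
have -> : 4^-1 * m ^+ 2 * c = W ^+ 2 by rewrite /c; field.
done.
Qed.
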